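(* Assume $(\phi1)$, $(\phi3)$ and $(\phi4)$. Then: (i) $J_1(s,b):=\phi(\frac{s^2+b^2}{2})b^2$ is increasing and convex in $b$ on $[0,\infty)$ for every fixed $s\in\mathbb{R}$; (ii) $J_2(s,b):=\Phi(\frac{s^2+b^2}{2})-\frac1N\phi(\frac{s^2+b^2}{2})b^2$ is increasing and convex in $b$ on $[0,\infty)$ for every fixed $s\in\mathbb{R}$.
   Context: $N\ge3$. $\phi:[0,\infty)\to\mathbb{R}$, $\Phi(s)=\int_0^s\phi$. $(\phi1)$: $\phi$ continuous, $0<\phi_0\le\phi\le\phi_1$ for constants $\phi_0<\phi_1$. $(\phi3)$: $\phi\in C^1([0,\infty))$, $s|\phi'(s)|\le C$ and $\phi_0\le\phi(s)+2s\phi'(s)$ for all $s\ge0$. $(\phi4)$: $\phi\in C^2([0,\infty))$, $s^2|\phi''(s)|\le C$, and for all $s\ge0$: $3\phi'(s)+2s|\phi''(s)|\le0$ and $0\le\phi(s)+5s\phi'(s)-2s^2|\phi''(s)|$. *)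

(* Defs.v *)
From Stdlib Require Import Reals.
From Coquelicot Require Import Coquelicot.
Open Scope R_scope.

Definition cont_on_half (f : R -> R) : Prop :=
  (forall x, 0 < x -> continuous f x) /\
  filterlim f (at_right 0) (locally (f 0)).

Definition deriv_on_half (f df : R -> R) : Prop :=
  (forall x, 0 < x -> is_derive f x (df x)) /\
  filterlim (fun h => (f h - f 0) / h) (at_right 0) (locally (df 0)).

Definition Phi (phi : R -> R) (s : R) : R := RInt phi 0 s.

Definition incr_on_half (g : R -> R) : Prop :=
  forall x y, 0 <= x -> x < y -> g x < g y.

Definition convex_on_half (g : R -> R) : Prop :=
  forall x y t, 0 <= x -> 0 <= y -> 0 <= t <= 1 ->
    g (t * x + (1 - t) * y) <= t * g x + (1 - t) * g y.

Definition J1 (phi : R -> R) (s b : R) : R :=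
  phi ((s ^ 2 + b ^ 2) / 2) * b ^ 2.

Definition J2 (N : nat) (phi : R -> R) (s b : R) : R :=
  Phi phi ((s ^ 2 + b ^ 2) / 2) - / INR N * phi ((s ^ 2 + b ^ 2) / 2) * b ^ 2.

(* Main.v *)
Require Import Defs.
From Stdlib Require Import Reals.
From Coquelicot Require Import Coquelicot.
From Stdlib Require Import Lra Psatz.
Open Scope R_scope.

Lemma is_derive_eq (f : R -> R) x l l' : is_derive f x l -> l = l' -> is_derive f x l'.
Proof. intros H <-; exact H. Qed.

Lemma D_mul (f g : R -> R) x a b : is_derive f x a -> is_derive g x b ->
  is_derive (fun y => f y * g y) x (a * g x + f x * b).
Proof. intros Hf Hg. apply (is_derive_mult f g x a b Hf Hg). intros; apply Rmult_comm. Qed.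

Lemma D_sub (f g : R -> R) x a b : is_derive f x a -> is_derive g x b ->
  is_derive (fun y => f y - g y) x (a - b).
Proof. intros Hf Hg. apply (is_derive_minus f g x a b Hf Hg). Qed.

Lemma D_u (f : R -> R) df s b : is_derive f ((s^2+b^2)/2) df ->
  is_derive (fun b => f ((s^2+b^2)/2)) b (b * df).
Proof.
  intros H. eapply is_derive_eq.
  apply (is_derive_comp f (fun b => (s^2+b^2)/2) b df b H).
  - auto_derive; auto; field.
  - reflexivity.
Qed.

Lemma D_sq x : is_derive (fun y => y^2) x (2*x).
Proof. auto_derive; auto; ring. Qed.

Lemma D_pow4 x : is_derive (fun y => y^4) x (4*x^3).
Proof. auto_derive; auto; ring. Qed.

Lemma cont_of_derive (f : R -> R) x l : is_derive f x l -> continuity_pt f x.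
Proof.
  intros H. apply continuity_pt_filterlim.
  apply (@ex_derive_continuous R_AbsRing R_NormedModule f x). exists l; exact H.
Qed.

Lemma mvt (g dg : R -> R) a b : a <= b ->
  (forall x, a < x < b -> is_derive g x (dg x)) ->
  (forall x, a <= x <= b -> continuity_pt g x) ->
  exists c, a <= c <= b /\ g b - g a = dg c * (b - a).
Proof.
  intros Hab Hd Hc.
  destruct (MVT_gen g a b dg) as [c [Hc1 Hc2]].
  - rewrite Rmin_left, Rmax_right by lra; exact Hd.
  - rewrite Rmin_left, Rmax_right by lra; exact Hc.
  - rewrite Rmin_left, Rmax_right in Hc1 by lra. exists c; split; auto.
Qed.

Lemma L_mono (g dg : R -> R) :
  (forall x, 0 < x -> is_derive g x (dg x)) ->
  (forall x, 0 <= x -> continuity_pt g x) ->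
  (forall x, 0 <= x -> 0 <= dg x) ->
  forall x y, 0 <= x -> x <= y -> g x <= g y.
Proof.
  intros Hd Hc Hp x y Hx Hxy.
  destruct (mvt g dg x y Hxy) as [c [Hc1 Hc2]].
  - intros; apply Hd; lra.
  - intros; apply Hc; lra.
  - assert (0 <= dg c) by (apply Hp; lra). nra.
Qed.

Lemma L_incr (g dg : R -> R) :
  (forall x, 0 < x -> is_derive g x (dg x)) ->
  (forall x, 0 <= x -> continuity_pt g x) ->
  (forall x, 0 <= x -> 0 <= dg x) ->
  (forall x, 0 < x -> 0 < dg x) ->
  forall x y, 0 <= x -> x < y -> g x < g y.
Proof.
  intros Hd Hc Hp Hs x y Hx Hxy.
  set (m := (x+y)/2).
  assert (g x <= g m) by (apply (L_mono g dg); auto; unfold m; lra).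
  destruct (mvt g dg m y) as [c [Hc1 Hc2]]; unfold m in *.
  - lra.
  - intros; apply Hd; lra.
  - intros; apply Hc; lra.
  - assert (0 < dg c) by (apply Hs; lra). nra.
Qed.

Lemma L_convex_le (g dg ddg : R -> R) :
  (forall x, 0 < x -> is_derive g x (dg x)) ->
  (forall x, 0 <= x -> continuity_pt g x) ->
  (forall x, 0 < x -> is_derive dg x (ddg x)) ->
  (forall x, 0 <= x -> continuity_pt dg x) ->
  (forall x, 0 <= x -> 0 <= ddg x) ->
  forall x y t, 0 <= x -> x <= y -> 0 <= t <= 1 ->
    g (t * x + (1 - t) * y) <= t * g x + (1 - t) * g y.
Proof.
  intros Hd Hc Hdd Hdc Hp x y t Hx Hxy Ht.
  set (z := t * x + (1 - t) * y).
  assert (Hxz : x <= z) by (unfold z; nra).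
  assert (Hzy : z <= y) by (unfold z; nra).
  destruct (mvt g dg x z Hxz) as [c1 [Hc1 E1]].
  - intros; apply Hd; lra.
  - intros; apply Hc; lra.
  - destruct (mvt g dg z y Hzy) as [c2 [Hc2 E2]].
    + intros; apply Hd; lra.
    + intros; apply Hc; lra.
    + assert (dg c1 <= dg c2) by (apply (L_mono dg ddg); auto; lra).
      assert (Ez1 : z - x = (1 - t) * (y - x)) by (unfold z; ring).
      assert (Ez2 : y - z = t * (y - x)) by (unfold z; ring).
      rewrite Ez1 in E1. rewrite Ez2 in E2.
      assert (0 <= t * (1 - t) * (y - x) * (dg c2 - dg c1)).
      { apply Rmult_le_pos; [|lra]. apply Rmult_le_pos; [|lra]. nra. }
      nra.
Qed.

Lemma L_convex (g dg ddg : R -> R) :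
  (forall x, 0 < x -> is_derive g x (dg x)) ->
  (forall x, 0 <= x -> continuity_pt g x) ->
  (forall x, 0 < x -> is_derive dg x (ddg x)) ->
  (forall x, 0 <= x -> continuity_pt dg x) ->
  (forall x, 0 <= x -> 0 <= ddg x) ->
  forall x y t, 0 <= x -> 0 <= y -> 0 <= t <= 1 ->
    g (t * x + (1 - t) * y) <= t * g x + (1 - t) * g y.
Proof.
  intros Hd Hc Hdd Hdc Hp x y t Hx Hy Ht.
  destruct (Rle_dec x y).
  - eapply L_convex_le; eauto.
  - replace (t * x + (1 - t) * y) with ((1-t) * y + (1 - (1-t)) * x) by ring.
    replace (t * g x + (1 - t) * g y) with ((1-t) * g y + (1 - (1-t)) * g x) by ring.
    eapply L_convex_le; eauto; lra.
Qed.

Lemma cont0 (h : R -> R) K : (forall b, Rabs b <= 1 -> Rabs (h b - h 0) <= K * Rabs b) ->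
  continuity_pt h 0.
Proof.
  intros H eps Heps.
  assert (HK : 0 <= K).
  { specialize (H 1). rewrite Rabs_R1 in H. pose proof (Rabs_pos (h 1 - h 0)). lra. }
  exists (Rmin 1 (eps / (K + 1))). split.
  - apply Rmin_pos; [lra|]. apply Rdiv_lt_0_compat; lra.
  - intros x [_ Hx]. unfold R_dist, dist in *. simpl in *. unfold R_dist in *. rewrite Rminus_0_r in Hx.
    pose proof (Rmin_l 1 (eps / (K+1))). pose proof (Rmin_r 1 (eps / (K+1))).
    specialize (H x ltac:(lra)).
    assert (K * Rabs x <= K * (eps / (K+1))) by (apply Rmult_le_compat_l; lra).
    assert (K * (eps / (K+1)) < eps).
    { apply (Rmult_lt_reg_r (K+1)); [lra|]. field_simplify; lra. }
    unfold dist; simpl. lra.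
Qed.

Lemma alg (v t p q r n phi0 phi1 : R) :
  3 <= n -> 0 < phi0 -> 0 <= t <= 2 * v -> phi0 <= p <= phi1 ->
  phi0 <= p + 2 * v * q -> 3 * q + 2 * v * Rabs r <= 0 ->
  0 <= p + 5 * v * q - 2 * v ^ 2 * Rabs r ->
  0 < 2 * p + t * q /\ 0 <= 2 * p + 5 * t * q + t ^ 2 * r /\
      0 < (n - 2) * p - t * q /\
      0 < n * (p + t * q) - (2 * p + 5 * t * q + t ^ 2 * r).
Proof.
  intros Hn H0 Ht Hp H1 H2 H3.
  assert (Hr : - Rabs r <= r <= Rabs r) by (exact (proj1 (Rabs_le_between r (Rabs r)) (Rle_refl _))).
  assert (Ha : 0 <= Rabs r) by apply Rabs_pos.
  generalize dependent (Rabs r); intros a H2 H3 Hr Ha.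
  assert (Hv : 0 <= v) by lra.
  assert (Hva : 0 <= v * a) by (apply Rmult_le_pos; lra).
  assert (Hq : q <= 0) by (lra).
  assert (E1 : (2 * v - t) * q <= 0) by nra.
  assert (E2 : t ^ 2 * r >= - (t ^ 2 * a)) by nra.
  assert (E3 : (2 * v - t) * (2 * v + t) * a >= 0).
  { apply Rle_ge. apply Rmult_le_pos; [|lra]. apply Rmult_le_pos; lra. }
  assert (E4 : t * (2 * v * a + 3 * q) <= 0).
  { assert (2 * v * a + 3 * q <= 0) by (lra).
    rewrite <- (Rmult_0_r t). apply Rmult_le_compat_l; lra. }
  assert (E5 : t * (2 * v - t) * a >= 0).
  { apply Rle_ge. apply Rmult_le_pos; [|lra]. apply Rmult_le_pos; lra. }
  assert (B1 : 0 < 2 * p + t * q) by nra.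
  assert (F1 : t * q >= 2 * v * q) by lra.
  assert (F2 : t ^ 2 * a <= 4 * v ^ 2 * a) by lra.
  assert (B2 : 0 <= 2 * p + 5 * t * q + t ^ 2 * r) by lra.
  assert (B3 : 0 < p + t * q) by nra.
  split; [exact B1|]. split; [exact B2|]. split; nra.
Qed.

Lemma right_eps (phi : R -> R) : filterlim phi (at_right 0) (locally (phi 0)) ->
  forall eps, 0 < eps -> exists d, 0 < d /\ forall x, 0 < x < d -> Rabs (phi x - phi 0) < eps.
Proof.
  intros H eps Heps.
  destruct (proj1 (filterlim_locally phi (phi 0)) H (mkposreal eps Heps)) as [d Hd].
  exists d. split; [apply cond_pos|]. intros x [Hx1 Hx2].
  apply (Hd x); [|exact Hx1].
  change (Rabs (x - 0) < d). rewrite Rminus_0_r, Rabs_pos_eq by lra. exact Hx2.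
Qed.

Lemma psi_cont (phi : R -> R) : cont_on_half phi ->
  forall z, 0 <= z -> continuous (fun x => phi (Rmax 0 x)) z.
Proof.
  intros [Hc Hr] z Hz. destruct (Rle_lt_or_eq_dec 0 z Hz) as [Hz'|<-].
  - apply (continuous_ext_loc _ phi). 
    + exists (mkposreal z Hz'). intros y Hy. change (Rabs (y - z) < z) in Hy.
      rewrite Rmax_right; [reflexivity|]. apply Rabs_def2 in Hy. lra.
    + apply Hc; exact Hz'.
  - apply continuity_pt_filterlim. intros eps Heps.
    destruct (right_eps phi Hr eps Heps) as [d [Hd Hd']].
    exists d. split; [exact Hd|]. intros x [_ Hx].
    unfold R_dist, dist in *; simpl in *; unfold R_dist in *.
    rewrite Rminus_0_r in Hx. apply Rabs_def2 in Hx.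
    rewrite (Rmax_left 0 0) by lra.
    destruct (Rle_dec x 0).
    + rewrite Rmax_left by lra. rewrite Rminus_diag, Rabs_R0; lra.
    + rewrite Rmax_right by lra. apply Hd'; lra.
Qed.

Lemma exRInt (phi : R -> R) : cont_on_half phi -> forall v, 0 <= v -> ex_RInt phi 0 v.
Proof.
  intros Hc v Hv.
  apply (ex_RInt_ext (fun x => phi (Rmax 0 x))).
  - intros x Hx. rewrite Rmin_left, Rmax_right in Hx by lra.
    rewrite Rmax_right by lra. reflexivity.
  - apply (@ex_RInt_continuous R_CompleteNormedModule). intros z Hz. rewrite Rmin_left, Rmax_right in Hz by lra.
    apply psi_cont; auto; lra.
Qed.

Lemma DPhi (phi : R -> R) : cont_on_half phi -> forall v, 0 < v -> is_derive (Phi phi) v (phi v).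
Proof.
  intros Hc v Hv. apply is_derive_RInt with 0.
  - exists (mkposreal v Hv). intros y Hy. change (Rabs (y - v) < v) in Hy.
    apply Rabs_def2 in Hy. unfold Phi. apply (@RInt_correct R_CompleteNormedModule). apply exRInt; auto; lra.
  - apply (proj1 Hc); exact Hv.
Qed.

Lemma hb x Y K : Rabs x <= 1 -> Rabs Y <= K -> Rabs (x * Y) <= K * Rabs x.
Proof. intros H1 H2. rewrite Rabs_mult. pose proof (Rabs_pos x). pose proof (Rabs_pos Y). nra. Qed.

Lemma D_id x : is_derive (fun y : R => y) x 1.
Proof. auto_derive; auto. Qed.

Theorem lemma6p1 (N : nat) (phi dphi ddphi : R -> R) (phi0 phi1 : R) :
  (3 <= N)%nat ->
  (* (phi1) *)
  cont_on_half phi -> 0 < phi0 -> phi0 < phi1 ->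
  (forall s, 0 <= s -> phi0 <= phi s <= phi1) ->
  (* (phi3): phi in C^1([0,oo)) with derivative dphi *)
  deriv_on_half phi dphi -> cont_on_half dphi ->
  (exists C, forall s, 0 <= s -> s * Rabs (dphi s) <= C) ->
  (forall s, 0 <= s -> phi0 <= phi s + 2 * s * dphi s) ->
  (* (phi4): phi in C^2([0,oo)) with second derivative ddphi *)
  deriv_on_half dphi ddphi -> cont_on_half ddphi ->
  (exists C, forall s, 0 <= s -> s ^ 2 * Rabs (ddphi s) <= C) ->
  (forall s, 0 <= s -> 3 * dphi s + 2 * s * Rabs (ddphi s) <= 0) ->
  (forall s, 0 <= s ->
     0 <= phi s + 5 * s * dphi s - 2 * s ^ 2 * Rabs (ddphi s)) ->
  forall s : R,
    (incr_on_half (J1 phi s) /\ convex_on_half (J1 phi s)) /\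
    (incr_on_half (J2 N phi s) /\ convex_on_half (J2 N phi s)).
Proof.
  intros HN Hc Hp0 Hp01 Hbd Hd Hdc _ Hmin Hdd Hddc _ Hdneg Hcnv s.
  assert (Hn : 3 <= INR N) by (replace 3 with (INR 3) by (simpl; ring); apply le_INR; exact HN).
  set (n := INR N) in *.
  assert (Dp : forall v, 0 < v -> is_derive phi v (dphi v)) by apply (proj1 Hd).
  assert (Ddp : forall v, 0 < v -> is_derive dphi v (ddphi v)) by apply (proj1 Hdd).
  assert (Hu0 : forall b, 0 <= (s^2+b^2)/2) by (intros; nra).
  assert (ALG : forall b,
    0 < 2 * phi ((s^2+b^2)/2) + b^2 * dphi ((s^2+b^2)/2) /\
    0 <= 2 * phi ((s^2+b^2)/2) + 5 * b^2 * dphi ((s^2+b^2)/2) + (b^2)^2 * ddphi ((s^2+b^2)/2) /\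
    0 < (n - 2) * phi ((s^2+b^2)/2) - b^2 * dphi ((s^2+b^2)/2) /\
    0 < n * (phi ((s^2+b^2)/2) + b^2 * dphi ((s^2+b^2)/2))
        - (2 * phi ((s^2+b^2)/2) + 5 * b^2 * dphi ((s^2+b^2)/2) + (b^2)^2 * ddphi ((s^2+b^2)/2))).
  { intros b. apply (alg ((s^2+b^2)/2) (b^2) (phi ((s^2+b^2)/2)) (dphi ((s^2+b^2)/2)) (ddphi ((s^2+b^2)/2)) n phi0 phi1); auto.
    all: first [split; nra | apply Hmin; auto | apply Hdneg; auto | apply Hcnv; auto]. }
  set (dg1 := fun b => b * (2 * phi ((s^2+b^2)/2) + b^2 * dphi ((s^2+b^2)/2))).
  set (ddg1 := fun b => 2 * phi ((s^2+b^2)/2) + 5 * b^2 * dphi ((s^2+b^2)/2) + b^4 * ddphi ((s^2+b^2)/2)).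
  set (dg2 := fun b => b * phi ((s^2+b^2)/2) - / n * dg1 b).
  set (ddg2 := fun b => phi ((s^2+b^2)/2) + b^2 * dphi ((s^2+b^2)/2) - / n * ddg1 b).
  assert (HD1 : forall b, 0 < (s^2+b^2)/2 -> is_derive (J1 phi s) b (dg1 b)).
  { intros b Hb. unfold J1. eapply is_derive_eq.
    apply D_mul; [apply D_u; apply Dp; exact Hb | apply D_sq].
    unfold dg1; simpl; ring. }
  assert (HDD1 : forall b, 0 < (s^2+b^2)/2 -> is_derive dg1 b (ddg1 b)).
  { intros b Hb. unfold dg1. eapply is_derive_eq.
    apply D_mul; [apply D_id|].
    apply (is_derive_plus (fun b => 2 * phi ((s^2+b^2)/2)) (fun b => b^2 * dphi ((s^2+b^2)/2))).
    apply is_derive_scal. apply D_u; apply Dp; exact Hb.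
    apply D_mul; [apply D_sq | apply D_u; apply Ddp; exact Hb].
    unfold ddg1, plus; simpl; ring. }
  assert (HD2 : forall b, 0 < (s^2+b^2)/2 -> is_derive (J2 N phi s) b (dg2 b)).
  { intros b Hb. unfold J2. eapply is_derive_eq.
    apply D_sub; [apply D_u; apply DPhi; auto |].
    apply D_mul; [|apply D_sq]. apply is_derive_scal. apply D_u; apply Dp; exact Hb.
    unfold dg2, dg1, n; simpl; ring. }
  assert (HDD2 : forall b, 0 < (s^2+b^2)/2 -> is_derive dg2 b (ddg2 b)).
  { intros b Hb. unfold dg2. eapply is_derive_eq.
    apply D_sub; [apply D_mul; [apply D_id | apply D_u; apply Dp; exact Hb]|].
    apply is_derive_scal. apply HDD1; exact Hb.
    unfold ddg2; simpl; ring. }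
  assert (Hpos : forall b, 0 < b -> 0 < (s^2+b^2)/2) by (intros; nra).
  assert (Hzero : forall b, 0 <= b -> ~ 0 < (s^2+b^2)/2 -> s = 0 /\ b = 0).
  { intros b Hb H. assert (s^2 + b^2 = 0) by (pose proof (Hu0 b); lra).
    split; nra. }
  assert (Hq0 : forall b, dphi ((s^2+b^2)/2) <= 0).
  { intros b. pose proof (Hdneg _ (Hu0 b)). pose proof (Rabs_pos (ddphi ((s^2+b^2)/2))).
    pose proof (Hu0 b). assert (0 <= (s^2+b^2)/2 * Rabs (ddphi ((s^2+b^2)/2))) by (apply Rmult_le_pos; lra).
    lra. }
  assert (Hninv : 0 < / n <= / 3).
  { split. apply Rinv_0_lt_compat; lra. apply Rinv_le_contravar; lra. }
  assert (HC : forall (g dg : R -> R), (forall b, 0 < (s^2+b^2)/2 -> is_derive g b (dg b)) ->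
     (s = 0 -> continuity_pt g 0) -> forall b, 0 <= b -> continuity_pt g b).
  { intros g dg Hg H0 b Hb. destruct (Rlt_dec 0 ((s^2+b^2)/2)) as [H|H].
    - apply cont_of_derive with (dg b). apply Hg; exact H.
    - destruct (Hzero b Hb H) as [-> ->]. apply H0; reflexivity. }
  assert (HC1 : forall b, 0 <= b -> continuity_pt (J1 phi s) b).
  { apply (HC _ dg1 HD1). intros Hs. apply (cont0 _ phi1). intros x Hx.
    unfold J1. rewrite Hs. replace (0^2) with 0 by ring.
    replace (phi ((0 + x ^ 2) / 2) * x ^ 2 - phi ((0 + 0) / 2) * 0) with (x * (x * phi ((0 + x^2)/2))) by ring.
    apply hb; [exact Hx|]. rewrite Rabs_mult. assert (0 <= x^2) by nra.
    pose proof (Hbd ((0 + x^2)/2) ltac:(lra)).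
    rewrite (Rabs_pos_eq (phi _)) by lra.
    pose proof (Rabs_pos x). nra. }
  assert (HC1' : forall b, 0 <= b -> continuity_pt dg1 b).
  { apply (HC _ ddg1 HDD1). intros Hs. apply (cont0 _ (2 * phi1)). intros x Hx.
    replace (dg1 x - dg1 0) with (x * (2 * phi ((s^2+x^2)/2) + x^2 * dphi ((s^2+x^2)/2)))
      by (unfold dg1; ring).
    apply hb; [exact Hx|]. destruct (ALG x) as [A _].
    pose proof (Hq0 x). pose proof (Hbd _ (Hu0 x)). assert (0 <= x^2) by nra.
    rewrite Rabs_pos_eq by lra. nra. }
  assert (HC2' : forall b, 0 <= b -> continuity_pt dg2 b).
  { apply (HC _ ddg2 HDD2). intros Hs. apply (cont0 _ phi1). intros x Hx.
    replace (dg2 x - dg2 0) with (x * (phi ((s^2+x^2)/2) - / n * (2 * phi ((s^2+x^2)/2) + x^2 * dphi ((s^2+x^2)/2))))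
      by (unfold dg2, dg1; ring).
    apply hb; [exact Hx|]. destruct (ALG x) as [A _].
    pose proof (Hq0 x). pose proof (Hbd _ (Hu0 x)). assert (0 <= x^2) by nra.
    apply Rabs_le. 
    assert (0 <= / n * (2 * phi ((s^2+x^2)/2) + x^2 * dphi ((s^2+x^2)/2)) <= / 3 * (2 * phi1)) by
      (split; [apply Rmult_le_pos; lra | apply Rmult_le_compat; nra]).
    lra. }
  assert (HC2 : forall b, 0 <= b -> continuity_pt (J2 N phi s) b).
  { apply (HC _ dg2 HD2). intros Hs. apply (cont0 _ (2 * phi1)). intros x Hx.
    unfold J2. rewrite Hs. replace (0^2) with 0 by ring.
    replace ((0 + 0) / 2) with 0 by field.
    assert (E : Phi phi 0 = 0) by (unfold Phi; rewrite RInt_point; reflexivity).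
    rewrite E.
    assert (Hw : 0 <= (0 + x^2)/2) by nra.
    assert (HP : Rabs (Phi phi ((0 + x^2)/2)) <= ((0 + x^2)/2 - 0) * phi1).
    { unfold Phi. apply abs_RInt_le_const; [lra| apply exRInt; auto |].
      intros t Ht. pose proof (Hbd t ltac:(lra)). rewrite Rabs_pos_eq; lra. }
    apply Rabs_le_between in HP.
    pose proof (Rabs_pos x). assert (Ex : x^2 = Rabs x ^ 2) by (rewrite pow2_abs; reflexivity).
    pose proof (Hbd _ Hw).
    assert (/ 3 < 1) by (apply (Rmult_lt_reg_l 3); [lra|]; rewrite Rinv_r; lra).
    assert (0 <= / n * phi ((0 + x^2)/2) <= phi1).
    { split; [apply Rmult_le_pos; lra|].
      apply Rle_trans with (1 * phi ((0 + x^2)/2)); [apply Rmult_le_compat_r|]; lra. }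
    assert (0 <= / n * phi ((0 + x^2)/2) * x^2 <= phi1 * Rabs x).
    { set (c := / n * phi ((0 + x^2)/2)) in *. rewrite Ex. set (X := Rabs x) in *.
      assert (0 <= X * X <= X).
      { split; [apply Rmult_le_pos; lra|]. rewrite <- (Rmult_1_r X) at 3. apply Rmult_le_compat_l; lra. }
      split; [apply Rmult_le_pos; [lra|apply pow2_ge_0]|].
      simpl. replace (X * (X * 1)) with (X * X) by ring.
      apply Rle_trans with (c * X). apply Rmult_le_compat_l; lra.
      apply Rmult_le_compat_r; lra. }
    assert (((0 + x^2)/2 - 0) * phi1 <= phi1 * Rabs x).
    { rewrite Ex. set (X := Rabs x) in *.
      assert (X * X <= X) by (rewrite <- (Rmult_1_r X) at 3; apply Rmult_le_compat_l; lra).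
      simpl. replace (X * (X * 1)) with (X * X) by ring.
      assert (X * X * phi1 <= X * phi1) by (apply Rmult_le_compat_r; lra). lra. }
    apply Rabs_le. change (INR N) with n. lra. }
  assert (Edg2 : forall b, dg2 b = / n * (b * ((n - 2) * phi ((s^2+b^2)/2) - b^2 * dphi ((s^2+b^2)/2)))).
  { intros b. unfold dg2, dg1. field. lra. }
  assert (Eddg2 : forall b, ddg2 b = / n * (n * (phi ((s^2+b^2)/2) + b^2 * dphi ((s^2+b^2)/2))
        - (2 * phi ((s^2+b^2)/2) + 5 * b^2 * dphi ((s^2+b^2)/2) + (b^2)^2 * ddphi ((s^2+b^2)/2)))).
  { intros b. unfold ddg2, ddg1. field. lra. }
  assert (Eddg1 : forall b, ddg1 b = 2 * phi ((s^2+b^2)/2) + 5 * b^2 * dphi ((s^2+b^2)/2) + (b^2)^2 * ddphi ((s^2+b^2)/2)).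
  { intros b. unfold ddg1. ring. }
  split; split.
  - intros x y Hx Hxy. refine (L_incr (J1 phi s) dg1 _ HC1 _ _ x y Hx Hxy).
    + intros b Hb. apply HD1, Hpos, Hb.
    + intros b Hb. destruct (ALG b) as [A _]. unfold dg1. apply Rmult_le_pos; lra.
    + intros b Hb. destruct (ALG b) as [A _]. unfold dg1. apply Rmult_lt_0_compat; lra.
  - intros x y t Hx Hy Ht. refine (L_convex (J1 phi s) dg1 ddg1 _ HC1 _ HC1' _ x y t Hx Hy Ht).
    + intros b Hb. apply HD1, Hpos, Hb.
    + intros b Hb. apply HDD1, Hpos, Hb.
    + intros b Hb. rewrite Eddg1. apply (ALG b).
  - intros x y Hx Hxy. refine (L_incr (J2 N phi s) dg2 _ HC2 _ _ x y Hx Hxy).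
    + intros b Hb. apply HD2, Hpos, Hb.
    + intros b Hb. destruct (ALG b) as [_ [_ [A _]]]. rewrite Edg2.
      apply Rmult_le_pos; [lra|]. apply Rmult_le_pos; lra.
    + intros b Hb. destruct (ALG b) as [_ [_ [A _]]]. rewrite Edg2.
      apply Rmult_lt_0_compat; [lra|]. apply Rmult_lt_0_compat; lra.
  - intros x y t Hx Hy Ht. refine (L_convex (J2 N phi s) dg2 ddg2 _ HC2 _ HC2' _ x y t Hx Hy Ht).
    + intros b Hb. apply HD2, Hpos, Hb.
    + intros b Hb. apply HDD2, Hpos, Hb.
    + intros b Hb. destruct (ALG b) as [_ [_ [_ A]]]. rewrite Eddg2.
      apply Rmult_le_pos; lra.
Qed.
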